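(* Let $p$ and $\ell$ be positive integers, let $\bar J_1,\dots,\bar J_p\in\mathcal{E}^+(X)$, and let $\bar J(x)=\min_{i=1,\dots,p}\bar J_i(x)$ for all $x\in X$. Then: (a) For all $x\in X$, $$\min_{u\in U(x)}\big\{g(x,u)+(T^{\ell-1}\bar J)(f(x,u))\big\}=\min_{i=1,\dots,p}\Big[\min_{u\in U(x)}\big\{g(x,u)+(T^{\ell-1}\bar J_i)(f(x,u))\big\}\Big],$$ equivalently $(T^\ell\bar J)(x)=\min_{i=1,\dots,p}(T^\ell\bar J_i)(x)$. (b) For all $x\in X$, $\tilde U(T^{\ell-1}\bar J,x)=\bigcup_{i\in\tilde I(\ell,x)}\tilde U(T^{\ell-1}\bar J_i,x)$, where $\tilde I(\ell,x)=\arg\min_{i=1,\dots,p}(T^\ell\bar J_i)(x)$.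
   Context: Setting: $X$ (state space) and $U$ (control space) are sets; for each $x\in X$, $U(x)\subset U$ is nonempty; $f:X\times U\to X$; the stage cost $g$ satisfies $0\le g(x,u)\le\infty$ for all $x\in X$, $u\in U(x)$. $\mathcal{E}^+(X)$ denotes the set of all functions $J:X\to[0,\infty]$. The Bellman operator $T:\mathcal{E}^+(X)\to\mathcal{E}^+(X)$ is $(TJ)(x)=\inf_{u\in U(x)}\{g(x,u)+J(f(x,u))\}$; $T^\ell$ is its $\ell$-fold composition, with $T^0J=J$. Standing assumption: for every $J\in\mathcal{E}^+(X)$ and every $x\in X$, the infimum defining $(TJ)(x)$ is attained. For $J\in\mathcal{E}^+(X)$ and $x\in X$, $\tilde U(J,x)=\arg\min_{u\in U(x)}\{g(x,u)+J(f(x,u))\}$. *)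

(* Defs.v *)
(* costs take values in the extended reals \bar R,
   functions of E^+(X) are J : X -> \bar R with 0 <= J x. *)
From HB Require Import structures.
From mathcomp Require Import all_boot all_order all_algebra.
From mathcomp Require Import all_classical all_reals ereal.
Set Implicit Arguments. Unset Strict Implicit. Unset Printing Implicit Defensive.
Import Order.TTheory GRing.Theory Num.Theory.
Local Open Scope classical_set_scope.
Local Open Scope ereal_scope.

Definition bellman (R : realType) (X U : Type) (Uc : X -> set U)
  (f : X -> U -> X) (g : X -> U -> \bar R) (J : X -> \bar R) : X -> \bar R :=
  fun x => ereal_inf [set g x u + J (f x u) | u in Uc x].

Definition Utilde (R : realType) (X U : Type) (Uc : X -> set U)
  (f : X -> U -> X) (g : X -> U -> \bar R) (J : X -> \bar R) (x : X) : set U :=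
  [set u | Uc x u /\ g x u + J (f x u) = bellman Uc f g J x].

Definition nonneg_fun (R : realType) (X : Type) (J : X -> \bar R) : Prop :=
  forall x, 0 <= J x.

Definition minI (R : realType) (p : nat) (a : 'I_p -> \bar R) : \bar R :=
  \big[mine/+oo]_(i < p) a i.

(* Main.v *)
Require Import Defs.
From HB Require Import structures.
From mathcomp Require Import all_boot all_order all_algebra.
From mathcomp Require Import all_classical all_reals ereal.
Import Order.TTheory GRing.Theory Num.Theory.
Local Open Scope classical_set_scope.
Local Open Scope ereal_scope.

Section Aux.
Set Implicit Arguments.
Variable R : realType.

Lemma minI_le p (a : 'I_p -> \bar R) i : minI a <= a i.
Proof.
rewrite /minI (bigD1 i) //=. by rewrite ge_min lexx.
Qed.

Lemma le_minI p (a : 'I_p -> \bar R) c : (forall i, c <= a i) -> c <= minI a.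
Proof.
move=> H; rewrite /minI; elim/big_ind: _ => //.
- by rewrite leey.
- by move=> y z Hy Hz; rewrite le_min Hy Hz.
Qed.

Lemma minI_att p (a : 'I_p -> \bar R) : (0 < p)%N -> exists i, minI a = a i.
Proof.
case: p a => [//|n] a _; rewrite /minI.
elim: n a => [|n IH] a.
  exists ord_max; rewrite big_ord_recr big_ord0 /=.
  by apply/eqP; rewrite eq_le ge_min le_min lexx leey orbT.
rewrite big_ord_recr /=.
have [j Hj] := IH (fun i => a (widen_ord (leqnSn _) i)).
rewrite Hj /Order.min; case: ifP => _.
  by exists (widen_ord (leqnSn _) j).
by exists ord_max.
Qed.

Variables (X U : Type) (Uc : X -> set U) (f : X -> U -> X) (g : X -> U -> \bar R).
Hypothesis Hg : forall x u, Uc x u -> 0 <= g x u.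

Lemma bellman_lb J x u : Uc x u -> bellman Uc f g J x <= g x u + J (f x u).
Proof. by move=> Hu; apply: ereal_inf_lbound; exists u. Qed.

Lemma bellman_glb J x c : (forall u, Uc x u -> c <= g x u + J (f x u)) ->
  c <= bellman Uc f g J x.
Proof. by move=> H; apply: le_ereal_inf_tmp => _ [u Hu <-]; apply: H. Qed.

Lemma bellman_ext J K : (forall y, J y = K y) -> bellman Uc f g J = bellman Uc f g K.
Proof. by move=> H; congr bellman; apply: funext. Qed.

Lemma bellman_min p (Hp : (0 < p)%N) (K : 'I_p -> X -> \bar R) x :
  bellman Uc f g (fun y => minI (fun i => K i y)) x
  = minI (fun i => bellman Uc f g (K i) x).
Proof.
apply/eqP; rewrite eq_le; apply/andP; split.
- apply: le_minI => i; apply: bellman_glb => u Hu.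
  apply: le_trans (bellman_lb _ Hu) _.
  by apply: leeD2l; apply: minI_le.
- apply: bellman_glb => u Hu.
  have [j Hj] := minI_att (fun i => K i (f x u)) Hp.
  rewrite Hj; apply: le_trans (minI_le _ j) _.
  exact: bellman_lb.
Qed.

End Aux.
Arguments minI_le {R p} a i.
Arguments minI_att {R p} a.
Arguments bellman_ext {R X U Uc f g J K}.
Arguments bellman_min {R X U Uc f g p} Hp K x.
Arguments bellman_lb {R X U Uc f g J x u}.

Theorem corollary1 (R : realType) (X U : Type) (Uc : X -> set U)
  (f : X -> U -> X) (g : X -> U -> \bar R)
  (HU : forall x, Uc x !=set0)
  (Hg : forall x u, Uc x u -> 0 <= g x u)
  (Hatt : forall J : X -> \bar R, nonneg_fun J ->
     forall x, exists2 u, Uc x u & g x u + J (f x u) = bellman Uc f g J x)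
  (p l : nat) (Hp : (0 < p)%N) (Hl : (0 < l)%N)
  (Jb : 'I_p -> X -> \bar R) (HJb : forall i, nonneg_fun (Jb i))
  (Jbar : X -> \bar R) (HJbar : forall x, Jbar x = minI (fun i => Jb i x)) :
  let T := bellman Uc f g in
  (forall x,
     T (iter l.-1 T Jbar) x = minI (fun i => T (iter l.-1 T (Jb i)) x)
     /\ iter l T Jbar x = minI (fun i => iter l T (Jb i) x)) /\
  (forall x,
     let Itilde : set 'I_p :=
       [set i | iter l T (Jb i) x = minI (fun j => iter l T (Jb j) x)] in
     Utilde Uc f g (iter l.-1 T Jbar) x =
       \bigcup_(i in Itilde) Utilde Uc f g (iter l.-1 T (Jb i)) x).
Proof.
move=> T.
have Hit : forall k y, iter k T Jbar y = minI (fun i => iter k T (Jb i) y).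
  elim=> [|k IH] y /=; first exact: HJbar.
  rewrite /T (bellman_ext IH); exact: (bellman_min Hp).
case: l Hl => [//|l] _ /=.
have HK : forall x, T (iter l T Jbar) x = minI (fun i => T (iter l T (Jb i)) x).
  by move=> x; rewrite /T (bellman_ext (Hit l)); apply: (bellman_min Hp).
split; first by move=> x; split; apply: HK.
move=> x; apply/seteqP; split.
- move=> u [Hu Heq].
  have [j Hj] := minI_att (fun i => iter l T (Jb i) (f x u)) Hp.
  rewrite Hit Hj in Heq.
  have E : T (iter l T (Jb j)) x = minI (fun i => T (iter l T (Jb i)) x).
    apply/eqP; rewrite eq_le minI_le /= -HK /T -Heq.
    by rewrite andbT; exact: bellman_lb.
  exists j; first exact: E.
  by split => //; rewrite Heq; exact: (etrans (HK x) (esym E)).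
- move=> u [i Hi [Hu Heq]].
  split => //.
  apply/eqP; rewrite eq_le; apply/andP; split; last exact: bellman_lb.
  rewrite Hit; apply: le_trans (leeD2l _ (minI_le _ i)) _.
  rewrite Heq; move: Hi => /= Hi.
  change (T (iter l T (Jb i)) x <= T (iter l T Jbar) x).
  by rewrite HK -Hi.
Qed.
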